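(* Let $Q=ABCD$ be any non-degenerate quadrangle of perimeter $2$ (convex, non-convex or self-intersecting) and $Q^\circ=KLMN$ its dual. Then $|AC|=|KM|$ and $|BD|=|LN|$.
   Context: Identify $\mathbb{R}^2$ with $\mathbb{C}$. A quadrangle $Q=ABCD$ is an ordered 4-tuple of points $A,B,C,D\in\mathbb{C}$: $A$ is the first vertex and the order $A\to B\to C\to D\to A$ is the direction of traversal. Its edge vectors are $z_1=B-A$, $z_2=C-B$, $z_3=D-C$, $z_4=A-D$, so $z_1+z_2+z_3+z_4=0$; its perimeter is $|z_1|+|z_2|+|z_3|+|z_4|$. $Q$ is non-degenerate if each pair of consecutive edge vectors $(z_1,z_2),(z_2,z_3),(z_3,z_4),(z_4,z_1)$ consists of nonzero, non-collinear vectors. Associated plane: for a non-degenerate $Q$ of perimeter $2$, choose $u_1,\dots,u_4\in\mathbb{C}$ with $u_k^2=z_k$, where $u_1$ is an arbitrary square root of $z_1$ and for $k=1,2,3$ the sign of $u_{k+1}$ is chosen so that $\operatorname{Im}(\overline{u_k}u_{k+1})$ has the same sign as $\operatorname{Im}(\overline{z_k}z_{k+1})$. Write $u_k=a_k+i b_k$ and $\bar a=(a_1,a_2,a_3,a_4)$, $\bar b=(b_1,b_2,b_3,b_4)$; these are orthonormal in $\mathbb{R}^4$. Let $\Pi=\operatorname{span}(\bar a,\bar b)$ and $\Pi^\perp$ its orthogonal complement. Dual quadrangle: choose an orthonormal basis $(\bar c,\bar d)$ of $\Pi^\perp$, put $w_k=(c_k+i d_k)^2$; then $\sum_k w_k=0$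 and $\sum_k|w_k|=2$. The dual quadrangle $Q^\circ=KLMN$ is the quadrangle with $L-K=w_1$, $M-L=w_2$, $N-M=w_3$, $K-N=w_4$. It is determined up to rotation, reflection and translation. *)

(* Defs.v *)
From Stdlib Require Import Reals Lra.
Open Scope R_scope.

Definition Cpx := (R * R)%type.
Definition Cadd (z w : Cpx) : Cpx := (fst z + fst w, snd z + snd w).
Definition Csub (z w : Cpx) : Cpx := (fst z - fst w, snd z - snd w).
Definition Cmul (z w : Cpx) : Cpx :=
  (fst z * fst w - snd z * snd w, fst z * snd w + snd z * fst w).
Definition Csq (z : Cpx) : Cpx := Cmul z z.
Definition Cnorm (z : Cpx) : R := sqrt (fst z ^ 2 + snd z ^ 2).
Definition ImConjMul (z w : Cpx) : R := fst z * snd w - snd z * fst w.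
Definition C0 : Cpx := (0, 0).

Definition collinear (z w : Cpx) : Prop := ImConjMul z w = 0.

Definition good_pair (z w : Cpx) : Prop :=
  z <> C0 /\ w <> C0 /\ ~ collinear z w.

Definition edge1 (A B C D : Cpx) := Csub B A.
Definition edge2 (A B C D : Cpx) := Csub C B.
Definition edge3 (A B C D : Cpx) := Csub D C.
Definition edge4 (A B C D : Cpx) := Csub A D.

Definition nondegenerate (A B C D : Cpx) : Prop :=
  let z1 := edge1 A B C D in let z2 := edge2 A B C D in
  let z3 := edge3 A B C D in let z4 := edge4 A B C D in
  good_pair z1 z2 /\ good_pair z2 z3 /\ good_pair z3 z4 /\ good_pair z4 z1.

Definition perimeter (A B C D : Cpx) : R :=
  Cnorm (edge1 A B C D) + Cnorm (edge2 A B C D)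
  + Cnorm (edge3 A B C D) + Cnorm (edge4 A B C D).

Definition same_sign (x y : R) : Prop :=
  (0 < x /\ 0 < y) \/ (x < 0 /\ y < 0) \/ (x = 0 /\ y = 0).

Definition admissible_roots (A B C D u1 u2 u3 u4 : Cpx) : Prop :=
  let z1 := edge1 A B C D in let z2 := edge2 A B C D in
  let z3 := edge3 A B C D in let z4 := edge4 A B C D in
  Csq u1 = z1 /\ Csq u2 = z2 /\ Csq u3 = z3 /\ Csq u4 = z4 /\
  same_sign (ImConjMul u1 u2) (ImConjMul z1 z2) /\
  same_sign (ImConjMul u2 u3) (ImConjMul z2 z3) /\
  same_sign (ImConjMul u3 u4) (ImConjMul z3 z4).

Record R4 := mkR4 { r1 : R; r2 : R; r3 : R; r4 : R }.
Definition dot4 (x y : R4) : R :=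
  r1 x * r1 y + r2 x * r2 y + r3 x * r3 y + r4 x * r4 y.

Definition vec_a (u1 u2 u3 u4 : Cpx) : R4 := mkR4 (fst u1) (fst u2) (fst u3) (fst u4).
Definition vec_b (u1 u2 u3 u4 : Cpx) : R4 := mkR4 (snd u1) (snd u2) (snd u3) (snd u4).

(* (c, d) is an orthonormal basis of the orthogonal complement of
   span(a, b) in R^4.  Since a, b are orthonormal (a fact of the theory),
   this complement has dimension 2, so two orthonormal vectors orthogonal
   to a and b form a basis of it. *)
Definition orthonormal_basis_of_perp (a b c d : R4) : Prop :=
  dot4 c c = 1 /\ dot4 d d = 1 /\ dot4 c d = 0 /\
  dot4 c a = 0 /\ dot4 c b = 0 /\ dot4 d a = 0 /\ dot4 d b = 0.

Definition wvec (c d : R4) (k : nat) : Cpx :=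
  match k with
  | 1%nat => Csq (r1 c, r1 d)
  | 2%nat => Csq (r2 c, r2 d)
  | 3%nat => Csq (r3 c, r3 d)
  | _ => Csq (r4 c, r4 d)
  end.

Definition is_dual_quad (c d : R4) (K L M N : Cpx) : Prop :=
  Csub L K = wvec c d 1 /\ Csub M L = wvec c d 2 /\
  Csub N M = wvec c d 3 /\ Csub K N = wvec c d 4.

(* Main.v *)
From Stdlib Require Import Reals Lra Psatz.
Ltac slra := lra.
Ltac snra := nra.
Ltac sring := ring.
From mathcomp Require Import all_boot all_algebra.
From mathcomp Require Import Rstruct.
From mathcomp Require Import ring lra.
Require Import Defs.
Import GRing.Theory.

Section MC.
Local Open Scope ring_scope.
Lemma rowsM (a1 a2 a3 a4 b1 b2 b3 b4 c1 c2 c3 c4 d1 d2 d3 d4 : R) :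
  a1*a1+a2*a2+a3*a3+a4*a4 = 1 ->
  b1*b1+b2*b2+b3*b3+b4*b4 = 1 ->
  c1*c1+c2*c2+c3*c3+c4*c4 = 1 ->
  d1*d1+d2*d2+d3*d3+d4*d4 = 1 ->
  a1*b1+a2*b2+a3*b3+a4*b4 = 0 ->
  a1*c1+a2*c2+a3*c3+a4*c4 = 0 ->
  a1*d1+a2*d2+a3*d3+a4*d4 = 0 ->
  b1*c1+b2*c2+b3*c3+b4*c4 = 0 ->
  b1*d1+b2*d2+b3*d3+b4*d4 = 0 ->
  c1*d1+c2*d2+c3*d3+c4*d4 = 0 ->
  [/\ a1*a1+b1*b1+c1*c1+d1*d1 = 1, a2*a2+b2*b2+c2*c2+d2*d2 = 1,
      a3*a3+b3*b3+c3*c3+d3*d3 = 1, a1*a2+b1*b2+c1*c2+d1*d2 = 0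
    & a2*a3+b2*b3+c2*c3+d2*d3 = 0].
Proof.
move=> Haa Hbb Hcc Hdd Hab Hac Had Hbc Hbd Hcd.
pose s := [:: [:: a1; b1; c1; d1]; [:: a2; b2; c2; d2];
              [:: a3; b3; c3; d3]; [:: a4; b4; c4; d4]].
pose M : 'M[R]_4 := \matrix_(i < 4, j < 4) nth 0 (nth [::] s i) j.
have H : M^T *m M = 1%:M.
  apply/matrixP => i j; rewrite !mxE !big_ord_recr !big_ord0 /= !mxE /= !add0r.
  case: i => [[|[|[|[|?]]]] Hi] //; case: j => [[|[|[|[|?]]]] Hj] //=;
    rewrite /= ?mxE /=; lra.
have H2 := mulmx1C H.
have E : forall i j, (M *m M^T) i j = (1%:M : 'M[R]_4) i j by move=> i j; rewrite H2.
have := E 0 0; have := E 1 1; have := E 2 2; have := E 0 1; have := E 1 2.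
rewrite !mxE !big_ord_recr !big_ord0 /= !mxE /= !add0r.
move=> e1 e2 e3 e4 e5; split; lra.
Qed.
End MC.

Open Scope R_scope.

Lemma key (p1 q1 p2 q2 c1 d1 c2 d2 : R) :
  p1*p1+q1*q1+c1*c1+d1*d1 = 1 -> p2*p2+q2*q2+c2*c2+d2*d2 = 1 ->
  p1*p2+q1*q2+c1*c2+d1*d2 = 0 ->
  (p1*p1-q1*q1 + (p2*p2-q2*q2))^2 + (p1*q1+q1*p1 + (p2*q2+q2*p2))^2 =
  (c1*c1-d1*d1 + (c2*c2-d2*d2))^2 + (c1*d1+d1*c1 + (c2*d2+d2*c2))^2.
Proof.
  intros h1 h2 h3.
  replace ((p1*p1-q1*q1 + (p2*p2-q2*q2))^2 + (p1*q1+q1*p1 + (p2*q2+q2*p2))^2)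
    with (((p1*p1+q1*q1)-(p2*p2+q2*q2))^2 + 4*(p1*p2+q1*q2)^2) by sring.
  replace ((c1*c1-d1*d1 + (c2*c2-d2*d2))^2 + (c1*d1+d1*c1 + (c2*d2+d2*c2))^2)
    with (((c1*c1+d1*d1)-(c2*c2+d2*d2))^2 + 4*(c1*c2+d1*d2)^2) by sring.
  replace (c1*c1+d1*d1) with (1 - (p1*p1+q1*q1)) by slra.
  replace (c2*c2+d2*d2) with (1 - (p2*p2+q2*q2)) by slra.
  replace (c1*c2+d1*d2) with (- (p1*p2+q1*q2)) by slra.
  sring.
Qed.

Lemma normsq (z : Cpx) : Cnorm (Csq z) = fst z * fst z + snd z * snd z.
Proof.
  destruct z as [x y]. cbv [Cnorm Csq Cmul fst snd].
  replace ((x*x - y*y)^2 + (x*y+y*x)^2) with ((x*x+y*y)^2) by sring.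
  apply sqrt_pow2. pose proof (Rle_0_sqr x); pose proof (Rle_0_sqr y); unfold Rsqr in *; slra.
Qed.

Theorem mainTheorem11 :
  forall (A B C D u1 u2 u3 u4 : Cpx) (c d : R4) (K L M N : Cpx),
    nondegenerate A B C D ->
    perimeter A B C D = 2 ->
    admissible_roots A B C D u1 u2 u3 u4 ->
    orthonormal_basis_of_perp (vec_a u1 u2 u3 u4) (vec_b u1 u2 u3 u4) c d ->
    is_dual_quad c d K L M N ->
    Cnorm (Csub A C) = Cnorm (Csub K M) /\ Cnorm (Csub B D) = Cnorm (Csub L N).
Proof.
  intros A B C D u1 u2 u3 u4 c d K L M N _ Hper Hadm Horth Hdual.
  destruct Hadm as (H1 & H2 & H3 & H4 & _).
  unfold perimeter in Hper.
  rewrite -H1 -H2 -H3 -H4 !normsq in Hper.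
  assert (S1 : fst (Csq u1) + fst (Csq u2) + fst (Csq u3) + fst (Csq u4) = 0).
  { rewrite H1 H2 H3 H4. unfold edge1, edge2, edge3, edge4, Csub; simpl; sring. }
  assert (S2 : snd (Csq u1) + snd (Csq u2) + snd (Csq u3) + snd (Csq u4) = 0).
  { rewrite H1 H2 H3 H4. unfold edge1, edge2, edge3, edge4, Csub; simpl; sring. }
  assert (EAC : Csub A C = (-(fst (Csq u1) + fst (Csq u2)), -(snd (Csq u1) + snd (Csq u2)))).
  { rewrite H1 H2. unfold edge1, edge2, Csub; simpl. f_equal; sring. }
  assert (EBD : Csub B D = (-(fst (Csq u2) + fst (Csq u3)), -(snd (Csq u2) + snd (Csq u3)))).
  { rewrite H2 H3. unfold edge2, edge3, Csub; simpl. f_equal; sring. }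
  destruct Hdual as (W1 & W2 & W3 & W4).
  assert (EKM : Csub K M = (-(fst (wvec c d 1) + fst (wvec c d 2)), -(snd (wvec c d 1) + snd (wvec c d 2)))).
  { rewrite -W1 -W2. unfold Csub; simpl. f_equal; sring. }
  assert (ELN : Csub L N = (-(fst (wvec c d 2) + fst (wvec c d 3)), -(snd (wvec c d 2) + snd (wvec c d 3)))).
  { rewrite -W2 -W3. unfold Csub; simpl. f_equal; sring. }
  rewrite EAC EBD EKM ELN.
  clear - Hper S1 S2 Horth.
  destruct u1 as [a1 b1], u2 as [a2 b2], u3 as [a3 b3], u4 as [a4 b4].
  destruct c as [c1 c2 c3 c4], d as [d1 d2 d3 d4].
  unfold orthonormal_basis_of_perp, dot4, vec_a, vec_b in Horth; simpl in *.
  destruct Horth as (O1 & O2 & O3 & O4 & O5 & O6 & O7).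
  assert (Aa : a1*a1+a2*a2+a3*a3+a4*a4 = 1) by slra.
  assert (Bb : b1*b1+b2*b2+b3*b3+b4*b4 = 1) by slra.
  assert (Ab : a1*b1+a2*b2+a3*b3+a4*b4 = 0) by slra.
  assert (Ac : a1*c1+a2*c2+a3*c3+a4*c4 = 0) by slra.
  assert (Ad : a1*d1+a2*d2+a3*d3+a4*d4 = 0) by slra.
  assert (Bc : b1*c1+b2*c2+b3*c3+b4*c4 = 0) by slra.
  assert (Bd : b1*d1+b2*d2+b3*d3+b4*d4 = 0) by slra.
  destruct (rowsM a1 a2 a3 a4 b1 b2 b3 b4 c1 c2 c3 c4 d1 d2 d3 d4 Aa Bb O1 O2 Ab
              Ac Ad Bc Bd O3) as [R1 R2 R3 R12 R23].
  assert (K1 := key a1 b1 a2 b2 c1 d1 c2 d2 R1 R2 R12).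
  assert (K2 := key a2 b2 a3 b3 c2 d2 c3 d3 R2 R3 R23).
  unfold Cnorm; simpl; split; f_equal.
  - simpl in K1. snra.
  - simpl in K2. snra.
Qed.
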